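(* If $w\ne w'$, with $w,w'\in(0,1)$, the measures $\mu_w$ and $\mu_{w'}$ on $X$ are mutually singular.
   Context: Let $\{X_n\}_{n\ge0}$ be the sequence of metric graphs where $X_0$ is a single edge identified with $[0,1]$, and $X_{n+1}$ is obtained from $X_n$ by subdividing each edge of $X_n$ into four equal parts and replacing it by a rescaled copy of the diamond graph. This diamond graph consists of six edges of equal length: edge 1 (initial segment), then two parallel paths of two edges each, namely edges 2,3 (upper path) and edges 4,5 (lower path), then edge 6 (final segment). Each edge of $X_n$ has length $4^{-n}$; collapsing the diamond to a segment gives $1$-Lipschitz maps $\pi_{n+1,n}:X_{n+1}\to X_n$, which compose to maps $\pi_{n,k}:X_n\to X_k$ with $\pi_{k,m}\circ\pi_{n,k}=\pi_{n,m}$. With $X_n$ given the length distance, $X$ is the Gromov–Hausdorff limit of $\{X_n\}$, with $1$-Lipschitz maps $\pi_{\infty,n}:X\to X_n$ satisfying $\pi_{n,k}\circ\pi_{\infty,n}=\pi_{\infty,k}$. For $w\in(0,1)$, $\mu_w$ is the unique probability measure on $X$ such that: (R1) for each $n\ge0$, the pushforward of $\mu_w$ under $\pi_{\infty,n}$ is a probability measure $\mu_{w,n}$ on $X_n$; (R2) $\mu_{w,n}$ is a multiple of arclength on each edge of $X_n$, and $\mu_{w,0}$ is Lebesgue measure on $[0,1]$; (R3) for each edge $e_n$ of $X_n$, letting $e_{n+1,i}$ ($i=1,\dots,6$, labelled as in the diamond graph) be the edges of $X_{n+1}$ whose union is $\pi_{n+1,n}^{-1}(e_n)$, one has $\mu_{w,n+1}$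 restricted to $e_{n+1,i}$ equal to $\mu_{w,n}(e_n)\,\mathcal{H}^1$ restricted to $e_{n+1,i}$ for $i=1,6$, to $w\,\mu_{w,n}(e_n)\,\mathcal{H}^1$ restricted to $e_{n+1,i}$ for $i=2,3$, and to $(1-w)\,\mu_{w,n}(e_n)\,\mathcal{H}^1$ restricted to $e_{n+1,i}$ for $i=4,5$, where $\mathcal{H}^1$ is $1$-dimensional Hausdorff measure. *)

(* Defs.v *)
From HB Require Import structures.
From mathcomp Require Import all_boot all_order all_algebra.
From mathcomp Require Import all_classical all_reals all_analysis.
Set Implicit Arguments. Unset Strict Implicit. Unset Printing Implicit Defensive.
Import Order.TTheory GRing.Theory Num.Theory.
Local Open Scope classical_set_scope.
Local Open Scope ring_scope.

(* Edge labels 1..6 of the diamond graph are encoded by i : 'I_6 with  *)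
(* val i = 0..5 (edge 1 = 0, edges 2,3 = 1,2 (upper path), edges 4,5  *)
(* = 3,4 (lower path), edge 6 = 5).                                    *)
(* An edge of X_n is a word a : seq 'I_6 of size n, stored with the    *)
(* FINEST letter first: the edge (i :: a) of X_{n+1} is the edge       *)
(* e_{n+1,i} of the diamond replacing the edge a of X_n.               *)
(* Every edge is oriented from its "start" (parameter 0) to its "end"  *)
(* (parameter 1), the children being oriented consistently.            *)

(* the four new vertices of a diamond: m1 = end of edge 1, top = middle *)
(* of the upper path, bot = middle of the lower path, m2 = start of 6. *)
Inductive lvtx := M1 | Top | Bot | M2.

(* vertices: the two endpoints of X_0, or a vertex created when        *)
(* subdividing the edge b.                                             *)
Inductive vtx := Root of bool | Mid of seq 'I_6 & lvtx.

(* endpoint of edge a: start (e = false) or end (e = true) *)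
Fixpoint endpt (a : seq 'I_6) (e : bool) : vtx :=
  match a with
  | [::] => Root e
  | i :: b =>
    match nat_of_ord i, e with
    | 0, false => endpt b false
    | 0, true => Mid b M1
    | 1, false => Mid b M1
    | 1, true => Mid b Top
    | 2, false => Mid b Top
    | 2, true => Mid b M2
    | 3, false => Mid b M1
    | 3, true => Mid b Bot
    | 4, false => Mid b Bot
    | 4, true => Mid b M2
    | _, false => Mid b M2
    | _, true => endpt b true
    end
  end.

(* points of the metric graphs: a vertex, or an interior point of an   *)
(* edge a at parameter t in (0,1) (arclength from the start = t/4^n).  *)
Inductive pt (R : Type) := PVtx of vtx | PIn of seq 'I_6 & R.
Arguments PVtx {R}.

Section Graphs.
Variable R : realType.

(* the points that belong to X_n *)
Definition valid (n : nat) (p : pt R) : Prop :=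
  match p with
  | PVtx (Root _) => True
  | PVtx (Mid b _) => (size b < n)%N
  | PIn a t => size a = n /\ 0 < t < 1
  end.

Definition pt_at (a : seq 'I_6) (t : R) : pt R :=
  if t == 0 then PVtx (endpt a false)
  else if t == 1 then PVtx (endpt a true)
  else PIn a t.

Definition edge (a : seq 'I_6) : set (pt R) :=
  pt_at a @` [set t : R | 0 <= t <= 1].

Definition edge_part (a : seq 'I_6) (S : set R) : set (pt R) := pt_at a @` S.

Definition edge_len (n : nat) : R := 4 ^- n.

(* length metric of X_n: infimum of the lengths of chains of edge      *)
(* segments joining p to q; the k-th segment runs along edge (a k) from *)
(* parameter (s k) to parameter (t k).                                  *)
Definition chain_ok (n : nat) (p q : pt R) (k : nat)
    (a : nat -> seq 'I_6) (s t : nat -> R) : Prop :=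
  [/\ (0 < k)%N,
      (forall i, (i < k)%N ->
         [/\ size (a i) = n, 0 <= s i <= 1 & 0 <= t i <= 1]),
      pt_at (a 0%N) (s 0%N) = p,
      pt_at (a k.-1) (t k.-1) = q &
      (forall i, (i.+1 < k)%N -> pt_at (a i) (t i) = pt_at (a i.+1) (s i.+1))].

Definition gdist (n : nat) (p q : pt R) : R :=
  inf [set l : R | exists k a s t, chain_ok n p q k a s t /\
          l = \sum_(i < k) edge_len n * `|t i - s i|].

(* offsets of the six edges of the diamond along the collapsed segment *)
Definition off (i : 'I_6) : R :=
  match nat_of_ord i with
  | 0 => 0
  | 1 | 3 => 1 / 4
  | 2 | 4 => 1 / 2
  | _ => 3 / 4
  end.

Definition lpos (m : lvtx) : R :=
  match m with M1 => 1 / 4 | Top | Bot => 1 / 2 | M2 => 3 / 4 end.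

(* pi_{n+1,n} : X_{n+1} -> X_n, collapsing each diamond to a segment *)
Definition proj (n : nat) (p : pt R) : pt R :=
  match p with
  | PIn (i :: a) t => pt_at a (off i + t / 4)
  | PIn [::] t => PIn [::] t (* not a point of X_{n+1}; irrelevant *)
  | PVtx (Root e) => PVtx (Root e)
  | PVtx (Mid b m) => if size b == n then pt_at b (lpos m) else PVtx (Mid b m)
  end.

(* relative weights of the six edges of the diamond in mu_w *)
Definition wt (w : R) (i : 'I_6) : R :=
  match nat_of_ord i with
  | 0 => 1
  | 1 | 2 => w
  | 3 | 4 => 1 - w
  | _ => 1
  end.

End Graphs.

(* The limit space X (a metric space dX on a type T whose sigma-algebra *)
(* is the Borel sigma-algebra) together with maps pi_{oo,n} realising   *)
(* X as the Gromov-Hausdorff limit of the X_n.                          *)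
Section Limit.
Variables (R : realType) (d : measure_display) (T : measurableType d).
Variable dX : T -> T -> R.
Variable pi : nat -> T -> pt R.

Definition is_metric : Prop :=
  (forall x y, 0 <= dX x y) /\ (forall x y, dX x y = 0 <-> x = y) /\
  (forall x y, dX x y = dX y x) /\
  (forall x y z, dX x z <= dX x y + dX y z).

Definition dopen (U : set T) : Prop :=
  forall x, U x -> exists2 e : R, 0 < e & [set y | dX x y < e] `<=` U.

Definition borel_sigma : Prop := @measurable d T = <<s dopen >>.

Definition complete_metric : Prop :=
  forall u : nat -> T,
    (forall e : R, 0 < e -> exists N, forall m k, (N <= m)%N -> (N <= k)%N ->
        dX (u m) (u k) < e) ->
    exists x, forall e : R, 0 < e -> exists N, forall m, (N <= m)%N ->
        dX (u m) x < e.

(* X is the GH limit of the X_n via the 1-Lipschitz maps pi_{oo,n}:     *)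
Definition GH_limit_maps : Prop :=
  is_metric /\ complete_metric /\
      (forall n x, valid n (pi n x)) /\
      (forall n p, valid n p -> exists x, pi n x = p) /\
      (forall n x y, gdist n (pi n x) (pi n y) <= dX x y) /\
      (forall n x, proj n (pi n.+1 x) = pi n x) /\
      (exists eps : nat -> R, eps @ \oo --> 0 /\
        forall n x y, `|dX x y - gdist n (pi n x) (pi n y)| <= eps n).

(* (R1)-(R3) for a probability measure mu on X with parameter w;       *)
(* pushforward mu_{w,n}(E) = mu (pi n @^-1` E).                         *)
Definition diamond_measure (w : R) (mu : probability T R) : Prop :=
  (forall S : set R, measurable S -> S `<=` [set t : R | (0 <= t <= 1)%R] ->
     mu (pi 0 @^-1` edge_part [::] S) = lebesgue_measure S) /\
  (forall n (a : seq 'I_6), size a = n -> exists c : R,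
     forall S : set R, measurable S -> S `<=` [set t : R | (0 <= t <= 1)%R] ->
       mu (pi n @^-1` edge_part a S) =
         (c * edge_len R n)%:E * lebesgue_measure S)%E /\
  (* (R3) density on the child e_{n+1,i} = (density on e_n) * wt w i *)
  (forall n (a : seq 'I_6) (i : 'I_6), size a = n ->
     forall S : set R, measurable S -> S `<=` [set t : R | (0 <= t <= 1)%R] ->
       mu (pi n.+1 @^-1` edge_part (i :: a) S) =
         (mu (pi n @^-1` edge a) * (wt w i / edge_len R n)%:E *
           ((edge_len R n.+1)%:E * lebesgue_measure S)))%E.

End Limit.

(* Main.v *)
Require Import Defs.
From HB Require Import structures.
From mathcomp Require Import all_boot all_order all_algebra.
From mathcomp Require Import all_classical all_reals all_analysis.
From mathcomp Require Import ring lra.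
From Stdlib Require Import Relations.
Import Order.TTheory GRing.Theory Num.Theory.
Local Open Scope classical_set_scope.
Local Open Scope ring_scope.
Set Implicit Arguments. Unset Strict Implicit. Unset Printing Implicit Defensive.
Section Conn.
Variable R : realType.

Definition adj (n : nat) (p q : pt R) : Prop :=
  exists a s t, [/\ size a = n, 0 <= s <= 1, 0 <= t <= 1, pt_at a s = p & pt_at a t = q].

Definition conn n := clos_trans _ (adj n).

Lemma conn_trans n p q r : conn n p q -> conn n q r -> conn n p r.
Proof. move=> H1 H2; exact: (t_trans _ _ _ _ _ H1 H2). Qed.

Lemma adj_sym n p q : adj n p q -> adj n q p.
Proof. by case=> a [s [t [? ? ? ? ?]]]; exists a, t, s. Qed.

Lemma conn_sym n p q : conn n p q -> conn n q p.
Proof.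
elim=> [x y /adj_sym|x y z _ IH1 _ IH2]; first exact: t_step.
exact: (t_trans _ _ _ _ _ IH2 IH1).
Qed.

Lemma conn_chain n p q : conn n p q -> exists k a s t, chain_ok n p q k a s t.
Proof.
move=> H; apply clos_trans_t1n in H; elim: H => [x y [a [s [t [Ha Hs Ht Hp Hq]]]]|x y z].
  exists 1%N, (fun _ => a), (fun _ => s), (fun _ => t); split => //.
move=> [a [s [t [Ha Hs Ht Hp Hq]]]] _ [k [A [S [T [k0 Hi H0 Hk Hl]]]]].
exists k.+1, (fun i => if i is j.+1 then A j else a),
  (fun i => if i is j.+1 then S j else s), (fun i => if i is j.+1 then T j else t).
split => //.
- by case=> [|i] //= /Hi.
- by move: Hk; case: k k0 {Hi Hl} => // k.
- by case=> [|i] /=; [rewrite Hq H0|move/Hl].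
Qed.

Definition i0 : 'I_6 := @Ordinal 6 0 isT.
Definition i1 : 'I_6 := @Ordinal 6 1 isT.
Definition i2 : 'I_6 := @Ordinal 6 2 isT.
Definition i3 : 'I_6 := @Ordinal 6 3 isT.
Definition i4 : 'I_6 := @Ordinal 6 4 isT.
Definition i5 : 'I_6 := @Ordinal 6 5 isT.

Lemma pt_at0 (a : seq 'I_6) : pt_at a (0 : R) = PVtx (endpt a false).
Proof. by rewrite /pt_at eqxx. Qed.
Lemma pt_at1 (a : seq 'I_6) : pt_at a (1 : R) = PVtx (endpt a true).
Proof. by rewrite /pt_at oner_eq0 eqxx. Qed.

Lemma adj_edge n a : size a = n ->
  adj n (PVtx (endpt a false)) (PVtx (endpt a true)).
Proof.
move=> Ha; exists a, 0, 1; split => //; rewrite ?pt_at0 ?pt_at1 //;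
  by rewrite lexx ler01.
Qed.

Lemma conn_edge n a : size a = n ->
  conn n (PVtx (endpt a false)) (PVtx (endpt a true)).
Proof. by move=> H; apply: t_step; apply: adj_edge. Qed.

Lemma conn_Q k : forall n b, (size b + k)%N = n ->
  conn n (PVtx (endpt b false)) (PVtx (endpt b true)).
Proof.
elim: k => [|k IH] n b Hb; first by apply: conn_edge; rewrite -Hb addn0.
have H j : (size (j :: b) + k)%N = n by rewrite -Hb /= addSnnS.
exact: (conn_trans (IH _ _ (H i0)) (conn_trans (IH _ _ (H i1))
  (conn_trans (IH _ _ (H i2)) (IH _ _ (H i5))))).
Qed.

Lemma conn_Q' n b : (size b <= n)%N ->
  conn n (PVtx (endpt b false)) (PVtx (endpt b true)).
Proof. by move=> H; apply: (@conn_Q (n - size b)); rewrite subnKC. Qed.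

Definition RF : pt R := PVtx (Root false).

Lemma conn_RF n : conn n RF RF.
Proof.
have -> : RF = PVtx (endpt (nseq n i0) false) by elim: n.
apply: t_step; exists (nseq n i0), 0, 0; split; rewrite ?size_nseq ?lexx ?ler01 ?pt_at0 //.
Qed.

Lemma conn_Mid n b m : (size b < n)%N ->
  conn n (PVtx (endpt b false)) RF -> conn n (PVtx (endpt b true)) RF ->
  conn n (PVtx (Mid b m)) RF.
Proof.
move=> Hb Hf Ht.
have H j : (size (j :: b) <= n)%N by [].
have HM1 : conn n (PVtx (Mid b M1)) RF.
  exact: conn_trans (conn_sym (conn_Q' (H i0))) Hf.
case: m => //.
- exact: conn_trans (conn_sym (conn_Q' (H i1))) HM1.
- exact: conn_trans (conn_sym (conn_Q' (H i3))) HM1.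
- exact: conn_trans (conn_Q' (H i5)) Ht.
Qed.

Lemma conn_endpt n c : (size c <= n)%N -> forall e, conn n (PVtx (endpt c e)) RF.
Proof.
elim: c => [|i c IH] Hc e.
  case: e; last exact: conn_RF.
  exact: (conn_sym (conn_Q' Hc)).
have Hc' : (size c < n)%N by [].
have Hf := IH (ltnW Hc') false; have Ht := IH (ltnW Hc') true.
have HM m := conn_Mid m Hc' Hf Ht.
clear Hc; case: i => [[|[|[|[|[|[|j]]]]]] Hj] //; case: e => /=;
  first [exact: Hf | exact: Ht | exact: HM].
Qed.

Lemma conn_valid n p : valid n p -> conn n p RF.
Proof.
case: p => [[e|b m]|a t] /=.
- by move=> _; exact: (@conn_endpt n [::] isT e).
- move=> Hb; apply: conn_Mid => //; apply: conn_endpt; exact: ltnW.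
- case=> Ha /andP[t0 t1].
  apply: conn_trans (conn_endpt (eq_leq Ha) false).
  apply: t_step; exists a, t, 0; split; rewrite ?pt_at0 ?lexx ?ler01 ?(ltW t0) ?(ltW t1) //.
  by rewrite /pt_at gt_eqF // lt_eqF.
Qed.

Lemma chain_exists n (p q : pt R) : valid n p -> valid n q ->
  exists k a s t, chain_ok n p q k a s t.
Proof.
move=> Hp Hq; apply: conn_chain.
exact: conn_trans (conn_valid Hp) (conn_sym (conn_valid Hq)).
Qed.

End Conn.
Section Open.
Variable R : realType.

Lemma pt_at_PIn (b a : seq 'I_6) (s u : R) : pt_at b s = PIn a u -> b = a /\ s = u.
Proof. by rewrite /pt_at; case: ifP => _ //; case: ifP => _ // [-> ->]. Qed.

Lemma pt_at_int (a : seq 'I_6) (u : R) : 0 < u < 1 -> pt_at a u = PIn a u.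
Proof. by case/andP=> u0 u1; rewrite /pt_at gt_eqF // lt_eqF. Qed.

Lemma sum_mono (f : nat -> R) j k : (forall i, 0 <= f i) -> (j <= k)%N ->
  \sum_(i < j) f i <= \sum_(i < k) f i.
Proof.
move=> f0; elim: k => [|k IH]; first by rewrite leqn0 => /eqP ->.
rewrite leq_eqVlt => /orP[/eqP -> //|]; rewrite ltnS => /IH H.
by rewrite big_ord_recr /= (le_trans H) // lerDl.
Qed.

Lemma near_int (x u : R) : `|x - u| < Num.min u (1 - u) -> 0 < x < 1.
Proof.
rewrite lt_min => /andP[]; rewrite !ltr_norml => /andP[h1 h2] /andP[h3 h4].
apply/andP; split; lra.
Qed.

Lemma chain_stay n (a : seq 'I_6) (u : R) q k A S T :
  chain_ok n (PIn a u) q k A S T ->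
  \sum_(i < k) `|T i - S i| < Num.min u (1 - u) ->
  exists2 v : R, 0 < v < 1 & q = PIn a v.
Proof.
case=> k0 Hi H0 Hk Hl Hsum.
have f0 i : 0 <= `|T i - S i| by [].
have key : forall j, (j < k)%N -> A j = a /\ `|T j - u| <= \sum_(i < j.+1) `|T i - S i|.
  elim=> [|j IH] Hj.
    have [-> <-] := pt_at_PIn H0; split => //; by rewrite big_ord1.
  have [Aj Bj] := IH (ltnW Hj).
  have Tj : 0 < T j < 1.
    apply: (@near_int _ u); apply: (le_lt_trans Bj); apply: (le_lt_trans _ Hsum).
    exact: (@sum_mono (fun i => `|T i - S i| : R) _ _ f0 (ltnW Hj)).
  have := Hl j Hj; rewrite Aj pt_at_int // => /esym/pt_at_PIn [-> Sj]; split => //.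
  rewrite big_ord_recr /= Sj; apply: (le_trans (ler_distD (T j) _ _)).
  by rewrite [X in _ <= X]addrC; apply: lerD.
have Hk1 : (k.-1 < k)%N by rewrite prednK.
have [Ak Bk] := key _ Hk1.
exists (T k.-1); last by rewrite -Hk Ak pt_at_int //; apply: (@near_int _ u);
  apply: (le_lt_trans Bk); apply: (le_lt_trans _ Hsum); exact: (@sum_mono (fun i => `|T i - S i| : R) _ _ f0 Hk1).
apply: (@near_int _ u); apply: (le_lt_trans Bk); apply: (le_lt_trans _ Hsum); exact: (@sum_mono (fun i => `|T i - S i| : R) _ _ f0 Hk1).
Qed.

Lemma edge_len_gt0 n : 0 < edge_len R n.
Proof. by rewrite /edge_len invr_gt0 exprn_gt0. Qed.

Definition intr (a : seq 'I_6) : set (pt R) := [set p | exists2 v : R, 0 < v < 1 & p = PIn a v].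

Variables (d : measure_display) (T : measurableType d) (dX : T -> T -> R)
  (pi : nat -> T -> pt R).

Lemma cyl_open (a : seq 'I_6) : GH_limit_maps dX pi ->
  dopen dX (pi (size a) @^-1` intr a).
Proof.
move=> [_ [_ [Hval [_ [Hlip _]]]]] x [u u01 Hx].
set n := size a.
have mpos : 0 < Num.min u (1 - u) by rewrite lt_min; case/andP: u01 => *; apply/andP; split; lra.
exists (edge_len R n * Num.min u (1 - u)); first by rewrite mulr_gt0 // edge_len_gt0.
move=> y /= Hy.
have Hg := le_lt_trans (Hlip n x y) Hy.
have [k [A [S [T' Hch]]]] := chain_exists (Hval n x) (Hval n y).
have /inf_lt /(_ Hg) [l [k' [A' [S' [T'' [Hch' ->]]]]]] : 
  [set l : R | exists k a s t, chain_ok n (pi n x) (pi n y) k a s t /\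
          l = \sum_(i < k) edge_len R n * `|t i - s i|] !=set0.
  by exists (\sum_(i < k) edge_len R n * `|T' i - S i|); exists k, A, S, T'.
rewrite -mulr_sumr ltr_pM2l ?edge_len_gt0 // => Hs.
rewrite Hx in Hch'.
have [v v01 ->] := chain_stay Hch' Hs.
by exists v.
Qed.

End Open.
Section Mass.
Variables (R : realType) (d : measure_display) (T : measurableType d)
  (pi : nat -> T -> pt R).

Definition I01 : set R := [set t : R | 0 < t < 1].
Definition C01 : set R := [set t : R | 0 <= t <= 1].

Lemma I01E : I01 = `]0, 1[%classic.
Proof. by apply/seteqP; split => x; rewrite /= in_itv. Qed.
Lemma C01E : C01 = `[0, 1]%classic.
Proof. by apply/seteqP; split => x; rewrite /= in_itv. Qed.

Lemma leb_I01 : lebesgue_measure I01 = 1%:E.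
Proof. by rewrite I01E lebesgue_measure_itv /= lte_fin ltr01 sube0. Qed.
Lemma leb_C01 : lebesgue_measure C01 = 1%:E.
Proof. by rewrite C01E lebesgue_measure_itv /= lte_fin ltr01 sube0. Qed.
Lemma mI01 : measurable I01.
Proof. rewrite I01E; exact: measurable_itv. Qed.
Lemma mC01 : measurable C01.
Proof. rewrite C01E; exact: measurable_itv. Qed.
Lemma I01C01 : I01 `<=` C01.
Proof. by move=> x /andP[h1 h2]; apply/andP; split; apply: ltW. Qed.
Lemma C01C01 : C01 `<=` C01.
Proof. by []. Qed.

Definition pw (w : R) (i : 'I_6) : R := wt w i / 4.
Definition M (w : R) (a : seq 'I_6) : R := \prod_(i <- a) pw w i.
Definition Cyl (a : seq 'I_6) : set T := pi (size a) @^-1` edge_part a I01.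

Lemma edge_lenS n : edge_len R n.+1 = edge_len R n / 4.
Proof. by rewrite /edge_len exprSr invfM. Qed.

Lemma mass (w : R) (mu : probability T R) : diamond_measure pi w mu ->
  forall a, mu (Cyl a) = (M w a)%:E /\ mu (pi (size a) @^-1` edge a) = (M w a)%:E.
Proof.
move=> [H0 [H2 H3]]; elim=> [|i a [IH1 IH2]].
  rewrite /M big_nil /Cyl /=; split; first by rewrite H0 ?leb_I01 //; [exact: mI01|exact: I01C01].
  by change (edge [::]) with (edge_part [::] C01); rewrite H0 ?leb_C01 //; exact: mC01.
have [c Hc] := H2 (size a).+1 (i :: a) erefl.
have E1 : mu (Cyl (i :: a)) = mu (pi (size (i :: a)) @^-1` edge (i :: a)).
  change (edge (i :: a)) with (edge_part (i :: a) C01).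
  by rewrite /Cyl /= (Hc I01 mI01 I01C01) (Hc C01 mC01 C01C01) leb_I01 leb_C01.
suff E2 : mu (Cyl (i :: a)) = (M w (i :: a))%:E by split => //; rewrite -E1.
rewrite /Cyl /= (H3 _ a i erefl I01 mI01 I01C01) IH2 leb_I01 mule1 -!EFinM; congr (_%:E).
rewrite /M big_cons -/(M w a) edge_lenS /pw.
have := edge_len_gt0 R (size a); rewrite lt0r => /andP[h _].
by field.
Qed.

End Mass.
Fixpoint words (n : nat) : seq (seq 'I_6) :=
  if n is m.+1 then [seq i :: a | i <- index_enum 'I_6, a <- words m] else [:: [::]].

Lemma words_size n a : a \in words n -> size a = n.
Proof.
elim: n a => [|n IH] a /=; first by rewrite inE => /eqP ->.
by move/allpairsPdep => [i [b [_ Hb ->]]] /=; rewrite (IH _ Hb).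
Qed.

Lemma words_uniq n : uniq (words n).
Proof.
elim: n => [|n IH] //=; apply: allpairs_uniq_dep => //; first exact: index_enum_uniq.
by move=> [i a] [j b] _ _ /= [-> ->].
Qed.

Section Sums.
Variable R : realType.

Lemma sum_words (f : 'I_6 -> R) n :
  \sum_(a <- words n) \prod_(i <- a) f i = (\sum_i f i) ^+ n.
Proof.
elim: n => [|n IH]; first by rewrite /= big_seq1 big_nil expr0.
rewrite /= big_allpairs_dep exprS mulr_suml; apply: eq_bigr => i _.
by under eq_bigr do rewrite big_cons; rewrite -mulr_sumr IH.
Qed.

Lemma wt_ge0 (w : R) i : 0 <= w <= 1 -> 0 <= wt w i.
Proof.
case/andP => h0 h1; rewrite /wt; case: (nat_of_ord i) => [|[|[|[|[|k]]]]]; lra.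
Qed.

Lemma pw_ge0 (w : R) i : 0 <= w <= 1 -> 0 <= pw w i.
Proof. by move=> h; rewrite /pw divr_ge0 // wt_ge0. Qed.

Lemma M_ge0 (w : R) a : 0 <= w <= 1 -> 0 <= M w a.
Proof. by move=> h; rewrite /M prodr_ge0 // => i _; rewrite pw_ge0. Qed.

Lemma sum_pw (w : R) : \sum_i pw w i = 1.
Proof. rewrite !big_ord_recl big_ord0 /pw /wt /=; lra. Qed.

Lemma sqrt_M (w w' : R) a : 0 <= w <= 1 -> 0 <= w' <= 1 ->
  Num.sqrt (M w a * M w' a) = \prod_(i <- a) Num.sqrt (pw w i * pw w' i).
Proof.
move=> h h'; elim: a => [|i a IH]; first by rewrite /M !big_nil mulr1 sqrtr1.
rewrite /M !big_cons -/(M w a) -/(M w' a) mulrACA sqrtrM; last by rewrite mulr_ge0 ?pw_ge0.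
by rewrite IH.
Qed.

Lemma amgm (p q : R) : 0 <= p -> 0 <= q -> Num.sqrt (p * q) <= (p + q) / 2.
Proof.
move=> hp hq; rewrite sqrtrM //.
have ha := sqrtr_ge0 p; have hb := sqrtr_ge0 q.
rewrite -{2}(sqr_sqrtr hp) -{2}(sqr_sqrtr hq).
set a := Num.sqrt p; set b := Num.sqrt q.
have : 0 <= (a - b) ^+ 2 by rewrite sqr_ge0.
nra.
Qed.

Lemma amgm_lt (p q : R) : 0 <= p -> 0 <= q -> p != q -> Num.sqrt (p * q) < (p + q) / 2.
Proof.
move=> hp hq pq; rewrite sqrtrM //.
have ha := sqrtr_ge0 p; have hb := sqrtr_ge0 q.
rewrite -{2}(sqr_sqrtr hp) -{2}(sqr_sqrtr hq).
have : Num.sqrt p != Num.sqrt q.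
  by apply: contraNneq pq => e; rewrite -(sqr_sqrtr hp) -(sqr_sqrtr hq) e.
set a := Num.sqrt p; set b := Num.sqrt q => ab.
have : 0 < (a - b) ^+ 2 by rewrite exprn_even_gt0 // subr_eq0.
nra.
Qed.

Definition hh (w w' : R) : R := \sum_i Num.sqrt (pw w i * pw w' i).

Lemma hh_ge0 (w w' : R) : 0 <= hh w w'.
Proof. by rewrite /hh sumr_ge0 // => i _; rewrite sqrtr_ge0. Qed.

Lemma hh_lt1 (w w' : R) : 0 <= w <= 1 -> 0 <= w' <= 1 -> w != w' -> hh w w' < 1.
Proof.
move=> h h' ww.
have E : 1 = \sum_i (pw w i + pw w' i) / 2.
  by rewrite -mulr_suml big_split /= !sum_pw; field.
rewrite E /hh (bigD1 i1) //= [X in _ < X](bigD1 i1) //=.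
apply: ltr_leD.
  apply: amgm_lt; rewrite ?pw_ge0 //.
  by apply: contraNneq ww; rewrite /pw /wt /= => e; apply/eqP; lra.
by apply: ler_sum => i _; apply: amgm; rewrite pw_ge0.
Qed.

End Sums.
Lemma le_sqrt_mul (R : realType) (x y : R) : 0 <= x -> x <= y -> x <= Num.sqrt (x * y).
Proof.
move=> x0 xy; have y0 := le_trans x0 xy.
rewrite -{1}(ger0_norm x0) -sqrtr_sqr ler_sqrt ?mulr_ge0 // expr2.
exact: ler_wpM2l.
Qed.

Lemma sum_filter_le (R : realType) (s : seq (seq 'I_6)) (P : pred (seq 'I_6)) (F : seq 'I_6 -> R) :
  (forall a, 0 <= F a) -> \sum_(a <- s | P a) F a <= \sum_(a <- s) F a.
Proof.
by move=> F0; rewrite [X in _ <= X](bigID P) /= lerDl sumr_ge0.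
Qed.

Lemma bigU_in (T : Type) (s : seq (seq 'I_6)) (P : pred (seq 'I_6)) (F : seq 'I_6 -> set T) x :
  (\big[setU/set0]_(b <- s | P b) F b) x -> exists2 b, b \in s & F b x.
Proof.
elim: s => [|a s IH]; first by rewrite big_nil.
rewrite big_cons; case: (P a) => [[Fa|/IH [b bs Fb]]|/IH [b bs Fb]].
- by exists a; rewrite ?mem_head.
- by exists b; rewrite // inE bs orbT.
- by exists b; rewrite // inE bs orbT.
Qed.

Section Final.
Variables (R : realType) (d : measure_display) (T : measurableType d)
  (dX : T -> T -> R) (pi : nat -> T -> pt R).

Lemma Cyl_intr a : Cyl pi a = pi (size a) @^-1` intr a.
Proof.
apply/seteqP; split => x /=.
  by case=> u Iu <-; exists u => //; rewrite pt_at_int.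
by case=> u Iu Hx; exists u => //; rewrite pt_at_int // Hx.
Qed.

Lemma Cyl_meas a : borel_sigma dX -> GH_limit_maps dX pi -> measurable (Cyl pi a).
Proof.
move=> bs gh; rewrite Cyl_intr /borel_sigma in bs *; rewrite bs.
apply: sub_gen_smallest; exact: cyl_open.
Qed.

Lemma Cyl_disj a b : size a = size b -> a != b -> Cyl pi a `&` Cyl pi b = set0.
Proof.
move=> sab ab; apply/seteqP; split => x //=; rewrite !Cyl_intr /= sab.
case=> [[u Iu ->] [v Iv []]] e _; by rewrite e eqxx in ab.
Qed.

Lemma mu_bigU (mu : {measure set T -> \bar R}) (P : pred (seq 'I_6)) n s :
  (forall a, measurable (Cyl pi a)) -> uniq s -> {subset s <= words n} ->
  mu (\big[setU/set0]_(a <- s | P a) Cyl pi a) = (\sum_(a <- s | P a) mu (Cyl pi a))%E.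
Proof.
move=> mC; elim: s => [|a s IH]; first by rewrite !big_nil measure0.
move=> /= /andP[nas us] sub.
have sub' : {subset s <= words n} by move=> b bs; apply: sub; rewrite inE bs orbT.
rewrite !big_cons; case: (P a); last exact: (IH us sub').
have D : Cyl pi a `&` \big[setU/set0]_(b <- s | P b) Cyl pi b = set0.
  apply/seteqP; split => x // [Cx Hb]; have [b bs Cb] := bigU_in Hb.
  have : Cyl pi a `&` Cyl pi b = set0.
    apply: Cyl_disj; first by rewrite (words_size (sub _ (mem_head _ _))) (words_size (sub' _ bs)).
    by apply: contraNneq nas => ->.
  by move=> E; suff : (set0 : set T) x by []; rewrite -E; split.
rewrite (measureU mu (mC a) _ D); first by congr (_ + _); exact: (IH us sub').
exact: bigsetU_measurable.
Qed.

Definition Bn (w w' : R) n := \big[setU/set0]_(a <- words n | M w a <= M w' a) Cyl pi a.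

Lemma Bn_bounds (w w' : R) (mu mu' : probability T R) n :
  borel_sigma dX -> GH_limit_maps dX pi ->
  0 <= w <= 1 -> 0 <= w' <= 1 ->
  diamond_measure pi w mu -> diamond_measure pi w' mu' ->
  (mu (Bn w w' n) <= ((hh w w') ^+ n)%:E /\ mu' (~` Bn w w' n) <= ((hh w w') ^+ n)%:E)%E.
Proof.
move=> bs gh hw hw' Dm Dm'.
have mC a : measurable (Cyl pi a) by exact: Cyl_meas.
have Hsum (mu0 : probability T R) w0 (Dm0 : diamond_measure pi w0 mu0) (Q : pred (seq 'I_6)) :
    mu0 (\big[setU/set0]_(a <- words n | Q a) Cyl pi a) = (\sum_(a <- words n | Q a) M w0 a)%:E.
  rewrite (@mu_bigU mu0 Q n (words n) mC (words_uniq n) (fun _ h => h)) -sumEFin; apply: eq_bigr => a _.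
  by case: (mass Dm0 a).
have Hsq : \sum_(a <- words n) Num.sqrt (M w a * M w' a) = (hh w w') ^+ n.
  rewrite /hh -sum_words; apply: eq_bigr => a _; exact: sqrt_M.
have sq0 a : 0 <= Num.sqrt (M w a * M w' a) by rewrite sqrtr_ge0.
split.
  rewrite /Bn (Hsum _ _ Dm) lee_fin -Hsq.
  apply: le_trans (sum_filter_le _ _ sq0).
  by apply: ler_sum => a Pa; apply: le_sqrt_mul => //; exact: M_ge0.
have mB : measurable (Bn w w' n) by apply: bigsetU_measurable.
rewrite probability_setC // /Bn (Hsum _ _ Dm') -EFinB lee_fin.
have tot : \sum_(a <- words n) M w' a = 1.
  by rewrite /M sum_words sum_pw expr1n.
have split_ : \sum_(a <- words n) M w' a = \sum_(a <- words n | M w a <= M w' a) M w' a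
   + \sum_(a <- words n | ~~ (M w a <= M w' a)) M w' a.
  by rewrite (bigID (fun a => M w a <= M w' a)).
have Hy : \sum_(a <- words n | ~~ (M w a <= M w' a)) M w' a <= (hh w w') ^+ n.
  rewrite -Hsq; apply: le_trans (sum_filter_le _ _ sq0).
  apply: ler_sum => a; rewrite -ltNge => Pa.
  rewrite mulrC; apply: le_sqrt_mul; [exact: M_ge0|exact: ltW].
rewrite tot in split_.
lra.
Qed.

End Final.
Lemma geom_eseries (R : realType) (h : R) : 0 <= h < 1 ->
  (\sum_(0 <= n <oo) ((h ^+ n)%:E) = ((1 - h)^-1)%:E)%E.
Proof.
case/andP=> h0 h1; apply: cvg_lim => //.
apply: cvg_EFin; first by apply: nearW => x; rewrite /= sumEFin.
rewrite [X in X @ _ --> _](_ : _ = series (geometric 1 h)); last first.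
  apply/funext => x; rewrite /= sumEFin /= /series /=; apply: eq_bigr => i _.
  by rewrite mul1r.
have := @cvg_geometric_series R 1 h; rewrite mul1r; apply.
by rewrite ger0_norm.
Qed.

Unset Implicit Arguments.
Set Strict Implicit.

Theorem lemma2p2 (R : realType) (d : measure_display) (T : measurableType d)
    (dX : T -> T -> R) (pi : nat -> T -> pt R)
    (w w' : R) (mu mu' : probability T R) :
  borel_sigma dX -> GH_limit_maps dX pi ->
  0 < w < 1 -> 0 < w' < 1 -> w != w' ->
  diamond_measure pi w mu -> diamond_measure pi w' mu' ->
  exists A : set T, [/\ measurable A, mu A = 0%E & mu' (~` A) = 0%E].
Proof.
move=> bs gh hw hw' ww Dm Dm'.
have hw1 : 0 <= w <= 1 by case/andP: hw => *; apply/andP; split; lra.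
have hw1' : 0 <= w' <= 1 by case/andP: hw' => *; apply/andP; split; lra.
set h := hh w w'.
have h01 : 0 <= h < 1 by rewrite hh_ge0 hh_lt1.
have G := geom_eseries h01.
pose F n := Bn pi w w' n.
have mF n : measurable (F n) by apply: bigsetU_measurable => a _; exact: (Cyl_meas _ bs gh).
have mFC n : measurable (~` F n) by apply: measurableC.
have Hb n := Bn_bounds n bs gh hw1 hw1' Dm Dm'.
exists (lim_sup_set F); split.
- by apply: bigcap_measurable => // k _; exact: bigcup_measurable.
- apply: lim_sup_set_cvg0 => //.
  apply: (le_lt_trans (lee_nneseries (v := fun n => (h ^+ n)%:E) _ _)); last by rewrite G ltry.
    by move=> n _ _; exact: measure_ge0.
  by move=> n _; case: (Hb n).
- have Z : mu' (lim_sup_set (fun n => ~` F n)) = 0%E.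
    apply: lim_sup_set_cvg0 => //.
    apply: (le_lt_trans (lee_nneseries (v := fun n => (h ^+ n)%:E) _ _)); last by rewrite G ltry.
      by move=> n _ _; exact: measure_ge0.
    by move=> n _; case: (Hb n).
  apply/eqP; rewrite eq_le measure_ge0 andbT -Z.
  apply: le_measure; rewrite ?inE.
  + by apply: measurableC; apply: bigcap_measurable => // k _; exact: bigcup_measurable.
  + by apply: bigcap_measurable => // k _; exact: bigcup_measurable.
  move=> x; rewrite /lim_sup_set setC_bigcap => -[n0 _ Hn0] n _.
  exists (maxn n n0); first by rewrite /= leq_maxl.
  move=> Fx; apply: Hn0; exists (maxn n n0) => //; by rewrite /= leq_maxr.
Qed.
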